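(* Let $G$ be a locally free group, $D$ a finitely generated subgroup of $G$ with $\mu_{G}(D)=m$, and $M$ a subgroup of $G$ such that $D\subseteq M$ and $r(M)=m$. For $g\in G\setminus M$, let $M_g=M\langle g\rangle$ be the subgroup of $G$ generated by $g$ and the elements of $M$, and let $r(M_g)=n$. If $n>m$, then $n=m+1$ and there exists a free subgroup $F_m$ of rank $m$ in $M$ such that $D\subseteq F_m$ and the subgroup $F_m\langle g\rangle$ generated by $F_m$ and $g$ is isomorphic to the free product $F_m*\langle g\rangle$.
   Context: A group is locally free if all of its finitely generated subgroups are free. For a finitely generated subgroup $H$ of a locally free group $G$, $\mu_G(H)$ is the least positive integer $m$ such that $H\subseteq F$ for some free subgroup $F$ of $G$ of rank $m$. The rank $r(G)$ of a locally free group $G$ is the maximum of $\{\mu_G(H) : H \text{ a finitely generated subgroup of } G\}$ if this maximum exists, and $r(G)=\infty$ otherwise (subgroups of $G$ are locally free, so $\mu$ and $r$ apply to them as well). *)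

(* Defs.v *)
From Stdlib Require Import List Arith Lia.
Import ListNotations.
Set Implicit Arguments.
Set Maximal Implicit Insertion.

Record group := Group {
  car :> Type;
  gmul : car -> car -> car;
  ginv : car -> car;
  gone : car;
  gmulA : forall x y z, gmul x (gmul y z) = gmul (gmul x y) z;
  gmul1 : forall x, gmul gone x = x;
  gmulV : forall x, gmul (ginv x) x = gone
}.

Section Defs.
Variable G : group.

Definition subset (A B : G -> Prop) := forall x, A x -> B x.

Definition is_subgroup (H : G -> Prop) :=
  H (gone G) /\ (forall x y, H x -> H y -> H (gmul G x y)) /\
  (forall x, H x -> H (ginv G x)).

Definition gen (S : G -> Prop) : G -> Prop :=
  fun x => forall H, is_subgroup H -> subset S H -> H x.

Definition same (A B : G -> Prop) := forall x, A x <-> B x.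

Definition fin_gen (H : G -> Prop) :=
  is_subgroup H /\ exists l : list G, same H (gen (fun y => In y l)).

(* words in a basis: letters (i, true) = x_i, (i, false) = x_i^-1 *)
Definition letter (l : list G) (a : nat * bool) : G :=
  if snd a then nth (fst a) l (gone G) else ginv G (nth (fst a) l (gone G)).

Definition eval_word (l : list G) (w : list (nat * bool)) : G :=
  fold_right (fun a acc => gmul G (letter l a) acc) (gone G) w.

Fixpoint reduced (w : list (nat * bool)) : Prop :=
  match w with
  | a :: ((b :: _) as w') => ~ (fst a = fst b /\ snd a <> snd b) /\ reduced w'
  | _ => True
  end.

Definition free_basis (l : list G) :=
  forall w, w <> [] -> reduced w -> (forall a, In a w -> fst a < length l) ->
    eval_word l w <> gone G.

Definition free_of_rank (F : G -> Prop) (m : nat) :=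
  exists l : list G, length l = m /\ free_basis l /\ same F (gen (fun y => In y l)).

Definition locally_free :=
  forall H, fin_gen H -> exists m, free_of_rank H m.

Definition in_free_of_rank (A H : G -> Prop) (m : nat) :=
  exists F, free_of_rank F m /\ subset F A /\ subset H F.

Definition is_mu (A H : G -> Prop) (m : nat) :=
  0 < m /\ in_free_of_rank A H m /\
  forall k, 0 < k -> k < m -> ~ in_free_of_rank A H k.

Definition rank_fin (A : G -> Prop) (n : nat) :=
  (exists H, fin_gen H /\ subset H A /\ is_mu A H n) /\
  (forall H k, fin_gen H -> subset H A -> is_mu A H k -> k <= n).

(* r(A) = r, with None standing for infinity *)
Definition rank_of (A : G -> Prop) (r : option nat) :=
  match r with
  | Some n => rank_fin A n
  | None => forall n, ~ rank_fin A n
  end.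

Definition rank_gt (r : option nat) (m : nat) :=
  match r with Some n => m < n | None => True end.

Definition join_elt (A : G -> Prop) (g : G) : G -> Prop :=
  gen (fun x => A x \/ x = g).

Definition cyclic (g : G) : G -> Prop := gen (fun x => x = g).

Fixpoint alternating (A B : G -> Prop) (s : list (bool * G)) : Prop :=
  match s with
  | [] => True
  | (t, x) :: s' =>
      (if t then A x else B x) /\ x <> gone G /\
      match s' with
      | [] => True
      | (t', _) :: _ => t <> t'
      end /\ alternating A B s'
  end.

Definition prod_seq (s : list (bool * G)) : G :=
  fold_right (fun a acc => gmul G (snd a) acc) (gone G) s.

(* the subgroup generated by A and B is (naturally) isomorphic to A * B:
   no nonempty alternating product of nontrivial elements is trivial *)
Definition gen_free_product (A B : G -> Prop) :=
  forall s, s <> [] -> alternating A B s -> prod_seq s <> gone G.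

End Defs.
Arguments subset {G}. Arguments is_subgroup {G}. Arguments gen {G}. Arguments same {G}.
Arguments fin_gen {G}. Arguments is_mu {G}. Arguments rank_of {G}. Arguments rank_fin {G}.
Arguments free_of_rank {G}. Arguments in_free_of_rank {G}. Arguments join_elt {G}. Arguments cyclic {G}.
Arguments gen_free_product {G}. Arguments free_basis {G}. Arguments alternating {G}.

(* Main.v *)
Require Import Defs.
From Stdlib Require Import List Arith Lia Classical.
Import ListNotations.

Section GL.
Context (G : group).

Lemma mulV1 (x : G) : gmul G x (ginv G x) = gone G.
Proof.
  set (y := ginv G x).
  transitivity (gmul G (gmul G (ginv G y) y) (gmul G x y)).
  { rewrite gmulV, gmul1. reflexivity. }
  rewrite <- gmulA, (gmulA G y x y). unfold y at 2. rewrite gmulV, gmul1. apply gmulV.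
Qed.

Lemma mul1r (x : G) : gmul G x (gone G) = x.
Proof. rewrite <- (gmulV G x), gmulA, mulV1. apply gmul1. Qed.

Lemma inv_uniq (x y : G) : gmul G x y = gone G -> y = ginv G x.
Proof.
  intro H. rewrite <- (gmul1 G y). rewrite <- (gmulV G x). rewrite <- gmulA, H. apply mul1r.
Qed.

Lemma invK (x : G) : ginv G (ginv G x) = x.
Proof. symmetry. apply inv_uniq. apply gmulV. Qed.

Lemma invM (x y : G) : ginv G (gmul G x y) = gmul G (ginv G y) (ginv G x).
Proof.
  symmetry. apply inv_uniq. rewrite gmulA, <- (gmulA G x y), mulV1, mul1r. apply mulV1.
Qed.

Lemma inv1 : ginv G (gone G) = gone G.
Proof. symmetry. apply inv_uniq. apply gmul1. Qed.

Lemma gen_subgroup (S : G -> Prop) : is_subgroup (gen S).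
Proof.
  split; [|split].
  - intros H [H1 _] _; exact H1.
  - intros x y Hx Hy H HH Hs. destruct HH as [A [B C]]. apply B; [apply Hx|apply Hy]; auto; split; auto.
  - intros x Hx H HH Hs. destruct HH as [A [B C]]. apply C; apply Hx; auto; split; auto.
Qed.

Lemma gen_in (S : G -> Prop) x : S x -> gen S x.
Proof. intros Hx H _ Hs. apply Hs, Hx. Qed.

Lemma gen_min (S H : G -> Prop) : is_subgroup H -> subset S H -> subset (gen S) H.
Proof. intros HH Hs x Hx. apply Hx; auto. Qed.

Lemma gen_mono (S S' : G -> Prop) : subset S S' -> subset (gen S) (gen S').
Proof. intros Hs. apply gen_min. apply gen_subgroup. intros x Hx. apply gen_in, Hs, Hx. Qed.

Definition word := list (nat * bool).

Lemma eval_app l (w1 w2 : word) : eval_word G l (w1 ++ w2) = gmul G (eval_word G l w1) (eval_word G l w2).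
Proof.
  induction w1 as [|a w IH]; simpl. now rewrite gmul1. rewrite IH. apply gmulA.
Qed.

Definition flip (a : nat * bool) := (fst a, negb (snd a)).
Definition inv_word (w : word) : word := rev (map flip w).

Lemma letter_flip l a : letter G l (flip a) = ginv G (letter G l a).
Proof. destruct a as [i []]; unfold letter, flip; simpl; auto. now rewrite invK. Qed.

Lemma eval_inv l w : eval_word G l (inv_word w) = ginv G (eval_word G l w).
Proof.
  induction w as [|a w IH]; unfold inv_word in *; simpl. now rewrite inv1.
  rewrite eval_app, IH, invM. simpl. rewrite letter_flip, mul1r. auto.
Qed.

Definition cancels (a b : nat * bool) := fst a = fst b /\ snd a <> snd b.
Lemma cancels_dec a b : {cancels a b} + {~ cancels a b}.
Proof.
  destruct a as [i s], b as [j t]; unfold cancels; simpl.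
  destruct (Nat.eq_dec i j); destruct (Bool.bool_dec s t); [right|left|right|right]; tauto.
Qed.

Lemma cancel_eval (l : list G) a b : cancels a b -> gmul G (letter G l a) (letter G l b) = gone G.
Proof.
  destruct a as [i []], b as [j []]; unfold cancels, letter; simpl; intros [E N]; subst;
  try (exfalso; now apply N). apply mulV1. apply gmulV.
Qed.

Fixpoint red (w : word) : word :=
  match w with
  | [] => []
  | a :: w' => match red w' with
               | b :: w'' => if cancels_dec a b then w'' else a :: b :: w''
               | [] => [a]
               end
  end.

Lemma red_reduced w : reduced (red w).
Proof.
  induction w as [|a w IH]; simpl; auto.
  destruct (red w) as [|b w''] eqn:E; simpl; auto.
  destruct (cancels_dec a b).
  - destruct w'' as [|c0 w3]; simpl in *; tauto.
  - simpl. split; auto.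
Qed.

Lemma red_in w x : In x (red w) -> In x w.
Proof.
  induction w as [|a w IH]; simpl; auto.
  destruct (red w) as [|b w'']; simpl.
  - intros [H|[]]. left; auto.
  - destruct (cancels_dec a b); simpl; intros H.
    + right. apply IH. simpl. auto.
    + destruct H as [H|H]; [left; auto|right; apply IH; exact H].
Qed.

Definition bnd (n : nat) (w : word) := forall a, In a w -> fst a < n.

End GL.

Lemma red_eval (X : group) (l : list X) w : eval_word X l (red w) = eval_word X l w.
Proof.
  induction w as [|a w IH]; simpl; auto.
  rewrite <- IH. destruct (red w) as [|b w'']; simpl; auto.
  destruct (cancels_dec a b); simpl; auto.
  rewrite gmulA, (cancel_eval X); auto. now rewrite gmul1.
Qed.


Lemma free_trivial (G : group) (b : list G) W : free_basis b -> bnd (length b) W ->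
  eval_word G b W = gone G -> red W = [].
Proof.
  intros Hf Hb He. destruct (red W) as [|c w] eqn:E; auto. exfalso.
  apply (Hf (c :: w)); try discriminate.
  - rewrite <- E. apply red_reduced.
  - intros a Ha. apply Hb, red_in. rewrite E; auto.
  - rewrite <- E, red_eval. auto.
Qed.


Lemma free_wd (G : group) (b : list G) W1 W2 (X : group) (a : list X) : free_basis b ->
  bnd (length b) W1 -> bnd (length b) W2 ->
  eval_word G b W1 = eval_word G b W2 -> eval_word X a W1 = eval_word X a W2.
Proof.
  intros Hf H1 H2 He.
  assert (E : red (W1 ++ inv_word W2) = []).
  { apply (free_trivial G b); auto.
    - intros c Hc. apply in_app_or in Hc. destruct Hc as [Hc|Hc]; auto.
      unfold inv_word in Hc. apply in_rev in Hc. apply in_map_iff in Hc.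
      destruct Hc as [d [<- Hd]]. unfold flip; simpl; apply H2, Hd.
    - rewrite eval_app, eval_inv, He. apply mulV1. }
  assert (E2 : eval_word X a (W1 ++ inv_word W2) = gone X).
  { rewrite <- red_eval, E. reflexivity. }
  rewrite eval_app, eval_inv in E2.
  apply inv_uniq in E2. rewrite <- (invK X (eval_word X a W2)). rewrite E2, invK. reflexivity.
Qed.


Definition wsubst (us : list word) (w : word) : word :=
  flat_map (fun a : nat * bool => if snd a then nth (fst a) us [] else inv_word (nth (fst a) us [])) w.

Lemma nth_map_eval (X : group) (l : list X) (us : list word) i :
  nth i (map (eval_word X l) us) (gone X) = eval_word X l (nth i us []).
Proof. change (gone X) with (eval_word X l []). apply map_nth. Qed.

Lemma eval_subst (X : group) (l : list X) us w :
  eval_word X l (wsubst us w) = eval_word X (map (eval_word X l) us) w.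
Proof.
  induction w as [|a w IH]; simpl; auto.
  rewrite eval_app, IH. f_equal.
  unfold letter. rewrite nth_map_eval. destruct (snd a); auto. apply eval_inv.
Qed.

Lemma bnd_app n w1 w2 : bnd n w1 -> bnd n w2 -> bnd n (w1 ++ w2).
Proof. intros H1 H2 a Ha. apply in_app_or in Ha. destruct Ha; auto. Qed.

Lemma bnd_inv n w : bnd n w -> bnd n (inv_word w).
Proof.
  intros H a Ha. unfold inv_word in Ha. apply in_rev in Ha. apply in_map_iff in Ha.
  destruct Ha as [d [<- Hd]]. unfold flip; simpl. apply H, Hd.
Qed.

Lemma bnd_nth n us i : (forall u, In u us -> bnd n u) -> bnd n (nth i us []).
Proof.
  intros H. destruct (Nat.lt_ge_cases i (length us)).
  - apply H, nth_In; auto.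
  - rewrite nth_overflow; auto. intros a [].
Qed.

Lemma bnd_subst n us w : (forall u, In u us -> bnd n u) -> bnd n (wsubst us w).
Proof.
  intros H. induction w as [|a w IH]; simpl. intros x [].
  apply bnd_app; auto. destruct (snd a). apply bnd_nth; auto. apply bnd_inv, bnd_nth; auto.
Qed.

Lemma left_inv (G : group) (b y : list G) us vs (X : group) (a : list X) :
  free_basis b -> map (eval_word G b) us = y -> (forall u, In u us -> bnd (length b) u) ->
  map (eval_word G y) vs = b -> length a = length b ->
  map (fun v => eval_word X (map (fun u => eval_word X a u) us) v) vs = a.
Proof.
  intros Hf Hus Hb Hvs Hl.
  apply (nth_ext _ _ (eval_word X (map (fun u => eval_word X a u) us) []) (gone X)).
  { rewrite length_map, Hl, <- Hvs, length_map. auto. }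
  intros k Hk. rewrite length_map in Hk. rewrite map_nth.
  rewrite <- eval_subst.
  assert (Hkb : k < length b) by (rewrite <- Hvs, length_map; auto).
  transitivity (eval_word X a [(k, true)]).
  - apply (free_wd G b); auto.
    + apply bnd_subst; auto.
    + intros c [<-|[]]. simpl. auto.
    + rewrite eval_subst, Hus. simpl. rewrite mul1r. unfold letter; simpl.
      rewrite <- Hvs, nth_map_eval. auto.
  - simpl. rewrite mul1r. unfold letter; simpl. auto.
Qed.

Lemma gen_words (G : group) (l : list G) x : gen (fun y => In y l) x ->
  exists w, bnd (length l) w /\ eval_word G l w = x.
Proof.
  intros Hx. apply Hx.
  - split; [|split].
    + exists []. split; auto. intros a [].
    + intros x1 x2 [w1 [B1 E1]] [w2 [B2 E2]]. exists (w1 ++ w2). split. apply bnd_app; auto.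
      rewrite eval_app; subst; auto.
    + intros x1 [w1 [B1 E1]]. exists (inv_word w1). split. apply bnd_inv; auto.
      rewrite eval_inv; subst; auto.
  - intros y Hy. destruct (In_nth l y (gone G) Hy) as [n [Hn E]].
    exists [(n, true)]. split. intros c [<-|[]]; simpl; auto.
    simpl. rewrite mul1r. unfold letter; simpl. auto.
Qed.

Lemma gen_red_words (G : group) (l : list G) x : gen (fun y => In y l) x ->
  exists w, bnd (length l) w /\ reduced w /\ eval_word G l w = x.
Proof.
  intros Hx. destruct (gen_words G l x Hx) as [w [B E]].
  exists (red w). split; [|split].
  - intros a Ha. apply B, red_in, Ha.
  - apply red_reduced.
  - rewrite red_eval. auto.
Qed.

Lemma words_list (G : group) (l y : list G) : (forall x, In x y -> gen (fun z => In z l) x) ->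
  exists us, map (eval_word G l) us = y /\ forall u, In u us -> bnd (length l) u.
Proof.
  induction y as [|x y IH]; intros H.
  - exists []. split; auto. intros u [].
  - destruct IH as [us [E B]]. intros z Hz; apply H; simpl; auto.
    destruct (gen_words G l x) as [w [Bw Ew]]. apply H; simpl; auto.
    exists (w :: us). split. simpl. rewrite E, Ew. auto.
    intros u [<-|Hu]; auto.
Qed.

Module MC.
From mathcomp Require Import all_boot all_fingroup.
Set Warnings "-notation-overridden".

Lemma size_len (T : Type) (l : list T) : size l = length l.
Proof. by elim: l => //= x l ->. Qed.

Definition permG (N : nat) : Defs.group :=
  @Defs.Group {perm 'I_N} (fun x y => (x * y)%g) (fun x => (x^-1)%g) 1%g
    (@mulgA _) (@mul1g _) (@mulVg _).

Lemma tup_count N j s (T S : list {perm 'I_N} -> list {perm 'I_N}) :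
  (forall a, length a = j -> length (T a) = s) ->
  (forall a, length a = j -> S (T a) = a) ->
  (#|{perm 'I_N}| ^ j <= #|{perm 'I_N}| ^ s) /\
  (j = s -> forall q, length q = s -> exists a, length a = j /\ T a = q).
Proof.
  move=> HT HS.
  pose Tt (t : j.-tuple {perm 'I_N}) : s.-tuple {perm 'I_N} :=
    insubd [tuple of nseq s 1%g] (T t).
  have Tv t : val (Tt t) = T t.
    rewrite /Tt insubdK //. apply/eqP. rewrite size_len HT // -size_len. exact: size_tuple.
  have Tinj : injective Tt.
    move=> t1 t2 E. apply: val_inj.
    have E2 : T t1 = T t2 by rewrite -!Tv E.
    have H1 := HS t1. have H2 := HS t2.
    rewrite E2 in H1. change (tval t1 = tval t2).
    have L1 : length t1 = j by rewrite -size_len; exact: size_tuple.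
    have L2 : length t2 = j by rewrite -size_len; exact: size_tuple.
    by rewrite -(H1 L1) (H2 L2).
  split.
    rewrite -!card_tuple. exact: leq_card Tinj.
  move=> ejs q Hq. subst j.
  have [g gK Kg] := injF_bij Tinj.
  have Hqs : size q == s by rewrite size_len Hq.
  pose qt : s.-tuple {perm 'I_N} := Tuple Hqs.
  exists (val (g qt)). split. rewrite -size_len. exact: size_tuple.
  by rewrite -Tv Kg.
Qed.

Lemma inord_inj K x y : x <= K -> y <= K -> (inord x : 'I_K.+1) = inord y -> x = y.
Proof.
  move=> hx hy E. have := f_equal (@nat_of_ord _) E. by rewrite !inordK.
Qed.

Lemma ext_perm K (ps : list (nat * nat)) :
  (forall p, In p ps -> p.1 <= K /\ p.2 <= K) ->
  (forall p p', In p ps -> In p' ps -> (p.1 = p'.1 <-> p.2 = p'.2)) ->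
  exists s : {perm 'I_K.+1}, forall p, In p ps -> s (inord p.1) = inord p.2.
Proof.
  elim: ps => [|[a b] ps IH] Hb Hc.
    exists 1%g. by move=> p [].
  have [s Hs] : exists s : {perm 'I_K.+1}, forall p, In p ps -> s (inord p.1) = inord p.2.
    apply: IH => [p Hp|p p' Hp Hp']; [apply: Hb|apply: Hc]; by right.
  case: (classic (exists p', In p' ps /\ p'.1 = a)) => [[p' [Hp' Ea]]|Hn].
    exists s => p [<-|Hp] /=; last exact: Hs.
    have := Hc (a, b) p' (or_introl erefl) (or_intror Hp'). case=> /= H1 _.
    by rewrite -Ea Hs // -H1 // Ea.
  have [ha hb] := Hb (a, b) (or_introl erefl). simpl in ha, hb.
  exists (s * tperm (s (inord a)) (inord b))%g => p [<-|Hp] /=.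
    by rewrite permM tpermL.
  rewrite permM Hs //. have [hp1 hp2] := Hb p (or_intror Hp).
  rewrite tpermD //.
    apply/eqP => E. rewrite -Hs // in E. have E2 := perm_inj E.
    apply: Hn. exists p. split => //. symmetry. exact: inord_inj E2.
  apply/eqP => E. have E2 := @inord_inj _ _ _ hb hp2 E. simpl in E2.
  have := Hc (a, b) p (or_introl erefl) (or_intror Hp). case=> /= _ H2.
  apply: Hn. exists p. split => //. symmetry. exact: H2.
Qed.

Lemma reduced_adj (w : word) k d : reduced w -> k.+1 < length w ->
  ~ cancels (List.nth k w d) (List.nth k.+1 w d).
Proof.
  elim: w k => [|a w IH] k //= Hr Hk.
  case: w IH Hr Hk => [|b w] IH Hr Hk //=.
  case: k Hk => [|k] Hk /=.
    by case: Hr.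
  apply: IH => //. by case: Hr.
Qed.

Definition pairs (w : word) (i : nat) : list (nat * nat) :=
  flat_map (fun k => let a := List.nth k w (0, true) in
     if fst a == i then [:: if snd a then (k, k.+1) else (k.+1, k)] else [::])
   (List.seq 0 (length w)).

Lemma pairs_in w i p : In p (pairs w i) -> exists k, k < length w /\
  fst (List.nth k w (0,true)) = i /\
  p = (if snd (List.nth k w (0,true)) then (k, k.+1) else (k.+1, k)).
Proof.
  rewrite /pairs in_flat_map => -[k [Hk Hp]]. apply in_seq in Hk.
  exists k. split. apply/ltP; lia.
  move: Hp. case: eqP => // E [<-|[]]. by [].
Qed.

Lemma pairs_mem w k : k < length w ->
  In (if snd (List.nth k w (0,true)) then (k, k.+1) else (k.+1, k))
     (pairs w (fst (List.nth k w (0,true)))).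
Proof.
  move=> Hk. rewrite /pairs in_flat_map. exists k. split.
    apply in_seq. move/ltP: Hk. lia.
  rewrite eqxx. by left.
Qed.

Lemma choice_list (A : Type) (d : A) (P : nat -> A -> Prop) n :
  (forall i, exists x, P i x) -> exists q, length q = n /\ forall i, i < n -> P i (List.nth i q d).
Proof.
  move=> H. elim: n => [|n [q [Lq Hq]]]. by exists [::].
  have [x Hx] := H n. exists (q ++ [:: x]). split. rewrite length_app Lq /=; lia.
  move=> i Hi. case: (ltngtP i n) => Hin.
  - rewrite app_nth1; first by apply: Hq. apply/ltP. by rewrite Lq.
  - exfalso. by rewrite ltnS leqNgt Hin in Hi.
  - rewrite app_nth2; last by (apply/leP; rewrite Lq Hin).
    by rewrite Lq Hin Nat.sub_diag.
Qed.

Lemma evalP_cons N (q : list (permG N)) a w :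
  eval_word (permG N) q (a :: w) = (letter (permG N) q a * eval_word (permG N) q w)%g.
Proof. by []. Qed.

Lemma resid (w : word) n : w <> [::] -> reduced w -> bnd n w ->
  exists N (q : list (permG N)), length q = n /\ eval_word (permG N) q w <> gone (permG N).
Proof.
  move=> Hne Hr Hb. set L := length w.
  have Hsig : forall i, exists s : {perm 'I_L.+1},
      forall p, In p (pairs w i) -> s (inord p.1) = inord p.2.
    move=> i. apply: ext_perm.
      move=> p /pairs_in [k [Hk [_ ->]]]. case: ifP => _ /=; split => //; exact: ltnW.
    move=> p p' /pairs_in [k [Hk [Ei ->]]] /pairs_in [k' [Hk' [Ei' ->]]].
    have Hadj : forall k1 k2, k1 < length w -> k2 < length w -> k2 = k1.+1 ->
        fst (List.nth k1 w (0,true)) = fst (List.nth k2 w (0,true)) ->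
        snd (List.nth k1 w (0,true)) = snd (List.nth k2 w (0,true)).
      move=> k1 k2 h1 h2 e12 ef. subst k2.
      have := @reduced_adj w k1 (0,true) Hr h2. rewrite /cancels.
      case: (snd _) => //; case: (snd _) => //; tauto.
    { case E1: (snd _); case E2: (snd _) => /=; split => H.
      all: try lia.
      all: exfalso;
        first [ have X := Hadj k' k Hk' Hk ltac:(lia) (etrans Ei' (esym Ei))
              | have X := Hadj k k' Hk Hk' ltac:(lia) (etrans Ei (esym Ei')) ];
        rewrite E1 E2 in X; discriminate. }
  have [q [Lq Hq]] := @choice_list _ (1%g : {perm 'I_L.+1})
     (fun i s => forall p, In p (pairs w i) -> s (inord p.1) = inord p.2) n Hsig.
  exists L.+1, q. split => //.
  have Hstep : forall k, k < L ->
      letter (permG L.+1) q (List.nth k w (0,true)) (inord k) = inord k.+1.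
    move=> k Hk.
    have Hi : fst (List.nth k w (0,true)) < n.
      apply/ltP. apply: Hb. apply: nth_In. by apply/ltP.
    have Hmem := @pairs_mem w k Hk. have Hs := Hq _ Hi _ Hmem.
    rewrite /letter. move: Hs. case: (snd _) => /= Hs.
      exact: Hs.
    change (((List.nth (List.nth k w (0, true)).1 q 1%g)^-1)%g (inord k) = inord k.+1).
    by rewrite -Hs permK.
  have Hwalk : forall w2 w1, app w1 w2 = w ->
      eval_word (permG L.+1) q w2 (inord (length w1)) = inord L.
    elim => [|a w2 IH] w1 E.
      rewrite app_nil_r in E. rewrite E.
      change ((1%g : {perm 'I_L.+1}) (inord (length w)) = inord L). by rewrite perm1.
    rewrite evalP_cons permM.
    have Hk : length w1 < L.
      rewrite /L -E length_app /=. apply/ltP. lia.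
    have Ha : List.nth (length w1) w (0,true) = a by rewrite -E nth_middle.
    rewrite -{1}Ha Hstep //.
    have -> : (length w1).+1 = length (app w1 [:: a]) by rewrite length_app /=; lia.
    apply: IH. by rewrite -app_assoc.
  move=> E1. have := Hwalk w [::] erefl. rewrite E1.
  change ((1%g : {perm 'I_L.+1}) (inord 0) = inord L -> False). rewrite perm1.
  move=> E2. have := @inord_inj L 0 L (leq0n _) (leqnn _) E2.
  move=> HL. apply: Hne. apply length_zero_iff_nil. by rewrite /L in HL; rewrite -HL.
Qed.

Lemma rank_le (G : Defs.group) (b y : list G) : free_basis b ->
  (forall x, In x y -> gen (fun z => In z b) x) ->
  (forall x, In x b -> gen (fun z => In z y) x) ->
  (length b <= length y)%coq_nat.
Proof.
  move=> Hf Hy Hb.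
  have [us [Eus Bus]] := words_list G b y Hy.
  have [vs [Evs Bvs]] := words_list G y b Hb.
  have [H1 _] := @tup_count 2 (length b) (length y)
    (fun a => List.map (fun u => eval_word (permG 2) a u) us)
    (fun c => List.map (fun v => eval_word (permG 2) c v) vs)
    ltac:(by move=> a _; rewrite length_map -Eus length_map)
    ltac:(by move=> a Ha; apply: (left_inv G b y us vs (permG 2) a)).
  rewrite card_Sn leq_exp2l // in H1. by apply/leP.
Qed.

Lemma hopf (G : Defs.group) (b y : list G) : free_basis b ->
  (forall x, In x y -> gen (fun z => In z b) x) ->
  (forall x, In x b -> gen (fun z => In z y) x) ->
  length b = length y -> free_basis y.
Proof.
  move=> Hf Hy Hb Hl w Hne Hr Hbw Hev.
  have [us [Eus Bus]] := words_list G b y Hy.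
  have [vs [Evs Bvs]] := words_list G y b Hb.
  have [N [q [Lq Hq]]] := resid w (length y) Hne Hr Hbw.
  have [_ H2] := @tup_count N (length b) (length y)
    (fun a => List.map (fun u => eval_word (permG N) a u) us)
    (fun c => List.map (fun v => eval_word (permG N) c v) vs)
    ltac:(by move=> a _; rewrite length_map -Eus length_map)
    ltac:(by move=> a Ha; apply: (left_inv G b y us vs (permG N) a)).
  have [a [La Ea]] := H2 Hl q Lq.
  apply: Hq. rewrite -Ea -eval_subst.
  transitivity (eval_word (permG N) a [::]); last by [].
  apply: (free_wd G b).
  all: try exact: Hf.
  all: try (apply: bnd_subst; exact: Bus).
  all: try (by move=> c []).
  by rewrite eval_subst Eus Hev.
Qed.

End MC.

Section Glue.
Context (G : group).

Lemma same_sub (A B : G -> Prop) : same A B -> subset A B.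
Proof. intros H x. apply H. Qed.
Lemma same_sub' (A B : G -> Prop) : same A B -> subset B A.
Proof. intros H x. apply H. Qed.

Lemma same_subgroup (A B : G -> Prop) : same A B -> is_subgroup B -> is_subgroup A.
Proof.
  intros H [h1 [h2 h3]]. split; [|split].
  - apply H, h1.
  - intros x y hx hy. apply H. apply h2; apply H; auto.
  - intros x hx. apply H. apply h3. apply H; auto.
Qed.

Lemma fr_subgroup (F : G -> Prop) m : free_of_rank F m -> is_subgroup F.
Proof. intros [l [_ [_ H]]]. eapply same_subgroup. exact H. apply gen_subgroup. Qed.

Lemma one_subgroup : is_subgroup (fun x : G => x = gone G).
Proof.
  split; [|split]; auto.
  - intros x y -> ->. apply gmul1.
  - intros x ->. apply inv1.
Qed.

Lemma gen_nil (x : G) : gen (fun y => In y []) x -> x = gone G.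
Proof. intros Hx. apply (gen_min _ (fun y => In y []) _ one_subgroup); auto. intros y []. Qed.

Lemma sub_one (A : G -> Prop) : is_subgroup A -> forall x, x = gone G -> A x.
Proof. intros [h _] x ->. exact h. Qed.

Lemma gen_fin_ext (S : G -> Prop) g x : gen (fun y => S y \/ y = g) x ->
  exists K : list G, (forall k, In k K -> S k) /\ gen (fun y => In y K \/ y = g) x.
Proof.
  intros Hx. apply Hx.
  - split; [|split].
    + exists []. split. intros k []. apply (gen_subgroup _).
    + intros x1 x2 [K1 [S1 G1]] [K2 [S2 G2]]. exists (K1 ++ K2). split.
      * intros k Hk. apply in_app_or in Hk. destruct Hk; auto.
      * apply (gen_subgroup _).
        -- apply (gen_mono _ (fun y => In y K1 \/ y = g)); auto.
           intros y [Hy|Hy]; [left; apply in_or_app; auto|right; auto].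
        -- apply (gen_mono _ (fun y => In y K2 \/ y = g)); auto.
           intros y [Hy|Hy]; [left; apply in_or_app; auto|right; auto].
    + intros x1 [K1 [S1 G1]]. exists K1. split; auto. apply (gen_subgroup _); auto.
  - intros y [Hy|Hy].
    + exists [y]. split. intros k [<-|[]]; auto. apply gen_in. left; simpl; auto.
    + exists []. split. intros k []. apply gen_in. right; auto.
Qed.

Lemma gen_fin_ext_list (S : G -> Prop) g (hl : list G) :
  (forall x, In x hl -> gen (fun y => S y \/ y = g) x) ->
  exists K : list G, (forall k, In k K -> S k) /\
    forall x, In x hl -> gen (fun y => In y K \/ y = g) x.
Proof.
  induction hl as [|h hl IH]; intros H.
  - exists []. split; intros k [].
  - destruct IH as [K1 [S1 G1]]. intros x Hx; apply H; simpl; auto.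
    destruct (gen_fin_ext S g h) as [K2 [S2 G2]]. apply H; simpl; auto.
    exists (K1 ++ K2). split.
    + intros k Hk. apply in_app_or in Hk. destruct Hk; auto.
    + intros x [<-|Hx].
      * apply (gen_mono _ (fun y => In y K2 \/ y = g)); auto.
        intros y [Hy|Hy]; [left; apply in_or_app; auto|right; auto].
      * apply (gen_mono _ (fun y => In y K1 \/ y = g)); auto.
        intros y [Hy|Hy]; [left; apply in_or_app; auto|right; auto].
Qed.

Lemma min_nat (P : nat -> Prop) : (exists n, P n) -> exists n, P n /\ forall k, k < n -> ~ P k.
Proof.
  intros [n Hn]. induction n as [n IH] using lt_wf_ind.
  destruct (classic (exists k, k < n /\ P k)) as [[k [Hk Pk]]|Hno].
  - apply (IH k Hk Pk).
  - exists n. split; auto. intros k Hk Pk. apply Hno. eauto.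
Qed.

Definition Mg (M : G -> Prop) g := join_elt M g.

Section Hyp.
Context (D M : G -> Prop) (m : nat) (g : G).
Context (LF : locally_free G) (HD : fin_gen D) (Hmu : is_mu (fun _ => True) D m)
  (HM : is_subgroup M) (HDM : subset D M) (HrM : rank_of M (Some m)) (Hg : ~ M g).

Lemma key (K : list G) : (forall k, In k K -> M k) ->
  exists F l, length l = m /\ free_basis l /\ same F (gen (fun y => In y l)) /\
    subset F M /\ subset D F /\ forall k, In k K -> F k.
Proof.
  intros HK. destruct HD as [_ [dl Hdl]].
  set (H := gen (fun y => In y (K ++ dl))).
  assert (HHM : subset H M).
  { apply gen_min; auto. intros y Hy. apply in_app_or in Hy. destruct Hy as [Hy|Hy]; auto.
    apply HDM, Hdl, gen_in, Hy. }
  assert (HfH : fin_gen H). { split. apply gen_subgroup. exists (K ++ dl). intros x; tauto. }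
  destruct HrM as [[H0 [_ [_ [Hm0 [Hin0 _]]]]] Hbound].
  assert (Ex : exists k, 0 < k /\ in_free_of_rank M H k).
  { destruct (LF H HfH) as [j Hj].
    destruct j as [|j].
    - exists m. split; auto. destruct Hin0 as [F0 [HF0 [HF0M _]]].
      exists F0. split; auto. split; auto.
      intros x Hx. destruct Hj as [l [Hl [_ Hs]]].
      destruct l; [|discriminate]. apply (proj1 (Hs x)), gen_nil in Hx.
      apply (sub_one F0 (fr_subgroup F0 m HF0)); auto.
    - exists (S j). split. lia. exists H. split; auto. split; auto. intros x; auto. }
  destruct (min_nat _ Ex) as [k [[Hk0 Hk] Hmin]].
  assert (Hmuk : is_mu M H k).
  { split; auto. split; auto. intros k' Hk'0 Hk' Hin. apply (Hmin k'); auto. }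
  assert (Hkm : k <= m) by (apply (Hbound H k); auto).
  destruct Hk as [F [HF [HFM HHF]]].
  assert (HDF : subset D F).
  { intros x Hx. apply HHF. apply (proj1 (Hdl x)) in Hx.
    apply (gen_mono _ (fun y => In y dl)); auto. intros y Hy. apply in_or_app; auto. }
  assert (k = m).
  { destruct Hmu as [_ [_ Hmin']]. destruct (Nat.lt_ge_cases k m) as [Hlt|]; [|lia].
    exfalso. apply (Hmin' k); auto. exists F. split; auto. split; auto. intros x; auto. }
  subst k. destruct HF as [l [Hl [Hfl Hsl]]].
  exists F, l. split; [auto|split; [auto|split; [exact Hsl|split; [auto|split; [auto|]]]]].
  intros k Hk. apply HHF, gen_in. apply in_or_app; auto.
Qed.

Lemma bound (H : G -> Prop) k : fin_gen H -> subset H (Mg M g) -> is_mu (Mg M g) H k ->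
  k <= S m /\ (k = S m -> exists F l, length l = m /\ free_basis l /\
     same F (gen (fun y => In y l)) /\ subset F M /\ subset D F /\ free_basis (l ++ [g])).
Proof.
  intros [_ [hl Hhl]] HHM [Hk0 [_ Hkmin]].
  destruct (gen_fin_ext_list M g hl) as [K [HKM HK]].
  { intros x Hx. apply HHM, Hhl, gen_in, Hx. }
  destruct (key K HKM) as [F [l [Hl [Hfl [HFl [HFM [HDF HKF]]]]]]].
  set (E := gen (fun y => In y (l ++ [g]))).
  assert (HfE : fin_gen E). { split. apply gen_subgroup. exists (l ++ [g]). intros x; tauto. }
  destruct (LF E HfE) as [j [b [Hb [Hfb Hsb]]]].
  assert (HlE : forall x, F x -> E x).
  { intros x Hx. apply (proj1 (HFl x)) in Hx. revert Hx. apply gen_mono. intros y Hy. apply in_or_app; auto. }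
  assert (HgE : E g). { apply gen_in. apply in_or_app. right; simpl; auto. }
  assert (HHE : subset H E).
  { intros x Hx. apply (proj1 (Hhl x)) in Hx. revert x Hx. apply gen_min. apply gen_subgroup.
    intros y Hy. apply HK in Hy. revert y Hy. apply gen_min. apply gen_subgroup.
    intros y [Hy|Hy]. apply HlE, HKF, Hy. subst; auto. }
  assert (HEM : subset E (Mg M g)).
  { apply gen_min. apply gen_subgroup. intros y Hy. apply in_app_or in Hy. destruct Hy as [Hy|[Hy|[]]].
    - apply gen_in. left. apply HFM, HFl, gen_in, Hy.
    - apply gen_in. right. auto. }
  assert (Hjle : j <= S m).
  { rewrite <- Hb. replace (S m) with (length (l ++ [g])) by (rewrite length_app; simpl; lia).
    apply (MC.rank_le G); auto.
    - intros x Hx. apply (proj1 (Hsb x)). apply (gen_in G). exact Hx.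
    - intros x Hx. apply (gen_in _ (fun z => In z b)) in Hx. apply (proj2 (Hsb x)) in Hx. exact Hx. }
  assert (Hj0 : 0 < j).
  { destruct j; [|lia]. exfalso. destruct b; [|discriminate].
    apply (proj1 (Hsb g)), gen_nil in HgE. apply Hg. rewrite HgE. apply HM. }
  assert (Hkj : k <= j).
  { destruct (Nat.lt_ge_cases j k) as [Hlt|]; auto. exfalso.
    apply (Hkmin j Hj0 Hlt). exists E. split. exists b. auto. split; auto. }
  split. lia. intros Hk. exists F, l.
  split; [auto|split; [auto|split; [exact HFl|split; [auto|split; [auto|]]]]].
  apply (MC.hopf G b); auto.
  - intros x Hx. apply (proj1 (Hsb x)). apply (gen_in G). exact Hx.
  - intros x Hx. apply (gen_in _ (fun z => In z b)) in Hx. apply (proj2 (Hsb x)) in Hx. exact Hx.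
  - rewrite length_app, Hb; simpl. lia.
Qed.

End Hyp.
End Glue.

Lemma eval_app_l (X : group) (l l' : list X) w : bnd (length l) w ->
  eval_word X (l ++ l') w = eval_word X l w.
Proof.
  induction w as [|a w IH]; intros Hb; simpl; auto.
  rewrite IH by (intros c Hc; apply Hb; simpl; auto).
  f_equal. unfold letter. rewrite app_nth1 by (apply Hb; simpl; auto). auto.
Qed.

Lemma reduced_app (w1 w2 : word) : reduced w1 -> reduced w2 ->
  (forall a b w', In a w1 -> w2 = b :: w' -> fst a <> fst b) -> reduced (w1 ++ w2).
Proof.
  induction w1 as [|a w1 IH]; intros H1 H2 Hbd; simpl; auto.
  destruct w1 as [|a' w1].
  - simpl. destruct w2 as [|b w2]; auto. split; auto.
    intros [E _]. apply (Hbd a b w2); simpl; auto.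
  - simpl in H1. destruct H1 as [Hn H1]. simpl. split; auto.
    apply IH; auto. intros c b w' Hc E. apply (Hbd c b w'); simpl; auto.
Qed.

Definition relab (m : nat) (a : nat * bool) := (m, snd a).

Lemma reduced_relab m (w : word) : (forall a, In a w -> fst a = 0) -> reduced w ->
  reduced (map (relab m) w).
Proof.
  induction w as [|a w IH]; intros Hz Hr; simpl; auto.
  destruct w as [|b w]; simpl; auto.
  simpl in Hr. destruct Hr as [Hn Hr]. split.
  - intros [_ Hs]. apply Hn. split; auto. rewrite (Hz a), (Hz b); simpl; auto.
  - apply IH; auto. intros c Hc; apply Hz; simpl; auto.
Qed.

Lemma eval_relab (X : group) (l : list X) g (w : word) : (forall a, In a w -> fst a = 0) ->
  eval_word X (l ++ [g]) (map (relab (length l)) w) = eval_word X [g] w.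
Proof.
  induction w as [|a w IH]; intros Hz; simpl; auto.
  rewrite IH by (intros c Hc; apply Hz; simpl; auto). f_equal.
  unfold letter, relab; simpl. rewrite app_nth2 by lia. rewrite Nat.sub_diag.
  rewrite (Hz a) by (simpl; auto). simpl. auto.
Qed.

Section FP.
Context (G : group) (F : G -> Prop) (l : list G) (g : G) (m : nat).
Context (Hl : length l = m) (HF : same F (gen (fun y => In y l))).

Lemma block (t : bool) x : (if t then F x else cyclic g x) -> x <> gone G ->
  exists w, w <> [] /\ bnd (S m) w /\ reduced w /\ eval_word G (l ++ [g]) w = x /\
    forall a, In a w -> (fst a < m <-> t = true).
Proof.
  intros Hx Hne. destruct t.
  - apply (proj1 (HF x)) in Hx. destruct (gen_red_words G l x Hx) as [w [Bw [Rw Ew]]].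
    exists w. split; [|split; [|split; [|split]]]; auto.
    + intros ->. apply Hne. rewrite <- Ew. auto.
    + intros a Ha. specialize (Bw a Ha). lia.
    + rewrite eval_app_l; auto.
    + intros a Ha. specialize (Bw a Ha). split; auto. lia.
  - assert (Hx' : gen (fun y => In y [g]) x).
    { revert Hx. apply gen_mono. intros y ->. simpl; auto. }
    destruct (gen_red_words G [g] x Hx') as [w [Bw [Rw Ew]]].
    assert (Hz : forall a, In a w -> fst a = 0) by (intros a Ha; specialize (Bw a Ha); simpl in Bw; lia).
    exists (map (relab m) w). split; [|split; [|split; [|split]]].
    + intros E. destruct w; [|discriminate]. apply Hne. rewrite <- Ew. auto.
    + intros a Ha. apply in_map_iff in Ha. destruct Ha as [c [<- _]]. unfold relab; simpl; lia.
    + apply reduced_relab; auto.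
    + rewrite <- Hl, eval_relab; auto.
    + intros a Ha. apply in_map_iff in Ha. destruct Ha as [c [<- _]]. unfold relab; simpl.
      split; intros H; [lia|discriminate].
Qed.

Lemma fp_words s : alternating F (cyclic g) s ->
  exists W, bnd (S m) W /\ reduced W /\ eval_word G (l ++ [g]) W = prod_seq G s /\
   match s with [] => W = [] | (t, _) :: _ => exists a W', W = a :: W' /\ (fst a < m <-> t = true) end.
Proof.
  induction s as [|[t x] s IH]; intros Ha.
  - exists []. split; [intros a []|split; simpl; auto].
  - simpl in Ha. destruct Ha as [Hx [Hne [Ht Ha]]].
    destruct (IH Ha) as [W' [B' [R' [E' H']]]].
    destruct (block t x Hx Hne) as [w [Hw [Bw [Rw [Ew Cw]]]]].
    exists (w ++ W'). split; [|split; [|split]].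
    + apply bnd_app; auto.
    + apply reduced_app; auto. intros a b w' Ha' Eb Efst.
      destruct s as [|[t' x'] s]. { subst; discriminate. }
      destruct H' as [a0 [W0 [E0 C0]]]. rewrite Eb in E0. injection E0 as -> ->.
      apply Ht. specialize (Cw a Ha'). rewrite Efst in Cw.
      destruct t, t'; auto; exfalso.
      * pose proof (proj2 Cw eq_refl) as h1. pose proof (proj1 C0 h1) as h2. discriminate.
      * pose proof (proj2 C0 eq_refl) as h1. pose proof (proj1 Cw h1) as h2. discriminate.
    + simpl. rewrite eval_app, Ew, E'. auto.
    + destruct w as [|a w]; [congruence|]. exists a, (w ++ W'). split; auto. apply Cw. simpl; auto.
Qed.

Lemma free_prod : free_basis (l ++ [g]) -> gen_free_product F (cyclic g).
Proof.
  intros Hf s Hne Ha E. destruct (fp_words s Ha) as [W [B [R [Ew Hh]]]].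
  destruct s as [|[t x] s]; [congruence|]. destruct Hh as [a [W' [-> _]]].
  apply (Hf (a :: W')); try discriminate; auto.
  - intros c Hc. rewrite length_app, Hl. simpl. specialize (B c Hc). lia.
  - rewrite Ew. auto.
Qed.
End FP.

Theorem lemma2p1 (G : group) (D M : G -> Prop) (m : nat) (g : G)
  (r : option nat) :
  locally_free G ->
  fin_gen D -> is_mu (fun _ => True) D m ->
  is_subgroup M -> subset D M -> rank_of M (Some m) ->
  ~ M g ->
  rank_of (join_elt M g) r ->
  rank_gt r m ->
  r = Some (S m) /\
  exists F : G -> Prop,
    free_of_rank F m /\ subset F M /\ subset D F /\
    gen_free_product F (cyclic g).
Proof.
  intros LF HD Hmu HM HDM HrM Hg Hr Hgt.
  pose proof (bound G D M m g LF HD Hmu HM HDM HrM Hg) as Hbd.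
  unfold Mg in Hbd.
  assert (Ex : exists H k, fin_gen H /\ subset H (join_elt M g) /\ is_mu (join_elt M g) H k /\ m < k).
  { destruct r as [n|].
    - destruct Hr as [[H [HH1 [HH2 HH3]]] _]. exists H, n. simpl in Hgt. auto.
    - apply NNPP. intros Hno. apply (Hr m). split.
      + exists D. split; auto. split.
        { intros x Hx. apply gen_in. left. apply HDM, Hx. }
        destruct (key G D M m LF HD Hmu HM HDM HrM [] (fun k (h : In k []) => match h with end))
          as [F [l [Hl [Hfl [HFl [HFM [HDF _]]]]]]].
        destruct Hmu as [Hm0 [_ Hmin]]. split; auto. split.
        * exists F. split. exists l. auto. split; auto.
          intros x Hx. apply gen_in. left. apply HFM, Hx.
        * intros k Hk0 Hkm [F' [HF' [_ HDF']]]. apply (Hmin k Hk0 Hkm). exists F'. split; auto.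
          split; auto. intros x _; exact I.
      + intros H k HH1 HH2 HH3. destruct (Nat.le_gt_cases k m) as [|Hlt]; auto.
        exfalso. apply Hno. exists H, k. auto. }
  destruct Ex as [H [k [HH1 [HH2 [HH3 Hmk]]]]].
  destruct (Hbd H k HH1 HH2 HH3) as [Hk1 Hk2].
  assert (Ek : k = S m) by lia.
  split.
  - destruct r as [n|].
    + destruct Hr as [[H' [HH1' [HH2' HH3']]] Hr2].
      destruct (Hbd H' n HH1' HH2' HH3') as [Hn _].
      pose proof (Hr2 H k HH1 HH2 HH3). f_equal. lia.
    + exfalso. apply (Hr (S m)). split.
      * exists H. rewrite <- Ek. auto.
      * intros H' k' h1 h2 h3. apply (Hbd H' k' h1 h2 h3).
  - destruct (Hk2 Ek) as [F [l [Hl [Hfl [HFl [HFM [HDF Hfree]]]]]]].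
    exists F. split; [exists l; auto|split; [auto|split; [auto|]]].
    apply (free_prod G F l g m Hl HFl Hfree).
Qed.
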